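(* Let $\mathfrak{A}$ be a class of transitive dynamical systems. Suppose that $\mathfrak{A}$ contains at least one system $(X,f)$ having a point $x\in X$ with dense orbit $\{f^n(x):n\ge 0\}$ such that the points $f^i(x)$, $i\in\mathbb{N}$, are pairwise distinct (a non-periodic system), and suppose there exists some strongly mixing dynamical system which is not in $\mathfrak{A}$. Then there is no Furstenberg family $\mathcal{F}$ such that for every dynamical system $(Y,g)$: $(Y,g)\in\mathfrak{A}$ if and only if $(Y,g)$ is $\mathcal{F}$-transitive.
   Context: A dynamical system is a pair $(X,f)$ with $X$ a compact metric space and $f:X\to X$ continuous. $\mathbb{N}=\{1,2,\dots\}$. For subsets $U,V\subset X$, $N(U,V)=\{n\in\mathbb{N}: U\cap f^{-n}(V)\neq\emptyset\}$. $(X,f)$ is transitive if $N(U,V)\ne\emptyset$ for all non-empty open $U,V\subset X$, and strongly mixing if $N(U,V)$ is cofinite for all non-empty open $U,V$. A Furstenberg family is a collection $\mathcal{F}$ of subsets of $\mathbb{N}$ such that $F_1\subset F_2$ and $F_1\in\mathcal{F}$ imply $F_2\in\mathcal{F}$. $(X,f)$ is $\mathcal{F}$-transitive if $N(U,V)\in\mathcal{F}$ for all non-empty open $U,V\subset X$. *)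

(* Defs.v *)
From Stdlib Require Import Reals List.
Open Scope R_scope.

Record CompactMetric := {
  cm_carrier :> Type;
  cm_dist : cm_carrier -> cm_carrier -> R;
  cm_dist_nonneg : forall x y, 0 <= cm_dist x y;
  cm_dist_eq0 : forall x y, cm_dist x y = 0 <-> x = y;
  cm_dist_sym : forall x y, cm_dist x y = cm_dist y x;
  cm_dist_tri : forall x y z, cm_dist x z <= cm_dist x y + cm_dist y z;
  cm_compact : forall (I : Type) (U : I -> cm_carrier -> Prop),
      (forall i x, U i x -> exists eps, 0 < eps /\
          forall y, cm_dist x y < eps -> U i y) ->
      (forall x, exists i, U i x) ->
      exists l : list I, forall x, exists i, In i l /\ U i x
}.

Definition is_open {X : CompactMetric} (U : X -> Prop) : Prop :=
  forall x, U x -> exists eps, 0 < eps /\ forall y, cm_dist X x y < eps -> U y.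

Definition nonempty {X : Type} (U : X -> Prop) : Prop := exists x, U x.

Definition continuous {X : CompactMetric} (f : X -> X) : Prop :=
  forall x eps, 0 < eps -> exists delta, 0 < delta /\
    forall y, cm_dist X x y < delta -> cm_dist X (f x) (f y) < eps.

Record DynSys := {
  ds_space : CompactMetric;
  ds_map : ds_space -> ds_space;
  ds_cont : continuous ds_map
}.

Definition iterate (S : DynSys) (n : nat) (x : ds_space S) : ds_space S :=
  Nat.iter n (ds_map S) x.

(** Subsets of N = {1,2,...} are encoded as predicates on nat; N(U,V) never
    contains 0. *)
Definition hitting (S : DynSys) (U V : ds_space S -> Prop) : nat -> Prop :=
  fun n => (1 <= n)%nat /\ exists x, U x /\ V (iterate S n x).

Definition transitive (S : DynSys) : Prop :=
  forall U V : ds_space S -> Prop, is_open U -> is_open V ->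
    nonempty U -> nonempty V -> exists n, hitting S U V n.

Definition strongly_mixing (S : DynSys) : Prop :=
  forall U V : ds_space S -> Prop, is_open U -> is_open V ->
    nonempty U -> nonempty V ->
    exists m, forall n, (m <= n)%nat -> (1 <= n)%nat -> hitting S U V n.

Definition furstenberg_family (F : (nat -> Prop) -> Prop) : Prop :=
  forall A B : nat -> Prop, (forall n, A n -> B n) -> F A -> F B.

Definition F_transitive (F : (nat -> Prop) -> Prop) (S : DynSys) : Prop :=
  forall U V : ds_space S -> Prop, is_open U -> is_open V ->
    nonempty U -> nonempty V -> F (hitting S U V).

Definition dense_orbit (S : DynSys) (x : ds_space S) : Prop :=
  forall U : ds_space S -> Prop, is_open U -> nonempty U ->
    exists n, U (iterate S n x).

Definition non_periodic_point (S : DynSys) (x : ds_space S) : Prop :=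
  forall i j, (1 <= i)%nat -> (1 <= j)%nat -> i <> j ->
    iterate S i x <> iterate S j x.

(* Main.v *)
Require Import Defs.
From Stdlib Require Import Reals List Lra Lia.
Open Scope R_scope.

Lemma iter_cont (S : DynSys) (n : nat) : forall x eps, 0 < eps -> exists delta, 0 < delta /\
  forall y, cm_dist _ x y < delta -> cm_dist _ (iterate S n x) (iterate S n y) < eps.
Proof.
  induction n as [|n IH]; intros x eps He.
  - exists eps; split; auto.
  - destruct (ds_cont S (iterate S n x) eps He) as [d1 [Hd1 H1]].
    destruct (IH x d1 Hd1) as [d2 [Hd2 H2]].
    exists d2; split; auto. intros y Hy. simpl. apply H1. apply H2. auto.
Qed.

Lemma sep (S : DynSys) (p : ds_space S)
  (Hp : forall n, (1 <= n)%nat -> iterate S n p <> p) :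
  forall m, exists delta, 0 < delta /\ forall z, cm_dist _ p z < delta ->
    forall n, (1 <= n)%nat -> (n < m)%nat -> delta <= cm_dist _ p (iterate S n z).
Proof.
  induction m as [|m IH].
  - exists 1; split; [lra|]. intros; lia.
  - destruct IH as [d1 [Hd1 H1]].
    destruct (Nat.eq_dec m 0) as [->|Hm].
    + exists d1; split; auto. intros z Hz n Hn1 Hn2; lia.
    + set (c := cm_dist _ p (iterate S m p)).
      assert (Hc : 0 < c).
      { pose proof (cm_dist_nonneg _ p (iterate S m p)).
        destruct (Rle_lt_or_eq_dec 0 c H) as [h|h]; auto.
        exfalso. symmetry in h. apply cm_dist_eq0 in h. apply (Hp m); [lia|auto]. }
      destruct (iter_cont S m p (c/2)) as [d2 [Hd2 H2]]; [lra|].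
      exists (Rmin d1 (Rmin d2 (c/2))); split.
      { repeat apply Rmin_pos; lra. }
      intros z Hz n Hn1 Hn2.
      pose proof (Rmin_l d1 (Rmin d2 (c/2))).
      pose proof (Rmin_r d1 (Rmin d2 (c/2))).
      pose proof (Rmin_l d2 (c/2)). pose proof (Rmin_r d2 (c/2)).
      destruct (Nat.eq_dec n m) as [->|Hnm].
      * pose proof (H2 z ltac:(lra)) as Ha.
        pose proof (cm_dist_tri _ p (iterate S m z) (iterate S m p)) as Hb.
        rewrite (cm_dist_sym _ (iterate S m z) (iterate S m p)) in Hb.
        fold c in Hb. lra.
      * pose proof (H1 z ltac:(lra) n Hn1 ltac:(lia)). lra.
Qed.

Theorem proposition3p1 (A : DynSys -> Prop)
  (HAtrans : forall S, A S -> transitive S)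
  (HAnp : exists S, A S /\ exists x, dense_orbit S x /\ non_periodic_point S x)
  (Hmix : exists S, strongly_mixing S /\ ~ A S) :
  ~ exists F : (nat -> Prop) -> Prop, furstenberg_family F /\
      forall S, A S <-> F_transitive F S.
Proof.
  intros [F [HF HA]].
  destruct HAnp as [S0 [HS0 [x [_ Hnp]]]].
  destruct Hmix as [T [HT HnT]].
  apply HnT. apply HA. intros U V HU HV HUn HVn.
  destruct (HT U V HU HV HUn HVn) as [m Hm].
  set (p := iterate S0 1 x).
  assert (Hp : forall n, (1 <= n)%nat -> iterate S0 n p <> p).
  { intros n Hn E. apply (Hnp (n + 1)%nat 1%nat); try lia.
    unfold p in E. unfold iterate in *. rewrite Nat.iter_add. exact E. }
  destruct (sep S0 p Hp m) as [d [Hd Hsep]].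
  set (B := fun z => cm_dist _ p z < d).
  assert (HB : is_open B).
  { intros z Hz. exists (d - cm_dist _ p z); split; [unfold B in Hz; lra|].
    intros y Hy. unfold B. pose proof (cm_dist_tri _ p z y). lra. }
  assert (HBn : nonempty B).
  { exists p. unfold B. replace (cm_dist _ p p) with 0; [lra|].
    symmetry. apply cm_dist_eq0. reflexivity. }
  pose proof (proj1 (HA S0) HS0 B B HB HB HBn HBn) as HFB.
  apply (HF _ (hitting T U V)) in HFB; auto.
  intros n [Hn1 [z [Hz1 Hz2]]].
  apply Hm; auto.
  destruct (Nat.lt_ge_cases n m) as [h|h]; auto.
  pose proof (Hsep z Hz1 n Hn1 h). unfold B in Hz2. lra.
Qed.
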